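(* Let $a,\alpha$ be real numbers with $-1<\alpha<a<1$. Then the solutions $\beta,b$ of the equation $$x^2+(a+\alpha)x+\frac{(a-\alpha)^2}{1-a\alpha}-3=0$$ are real, and, labeling them so that $\beta\le b$, one has $\beta<-1$ and $b>1$. *)

(* Defs.v *)
From Stdlib Require Import Reals.

(* Main.v *)
Require Import Defs.
From Stdlib Require Import Reals Lra Psatz.
Open Scope R_scope.

Theorem lemma4p2 (a alpha : R) (h1 : -1 < alpha) (h2 : alpha < a) (h3 : a < 1) :
  exists beta b : R,
    beta <= b /\
    (forall x : R,
        x ^ 2 + (a + alpha) * x + (a - alpha) ^ 2 / (1 - a * alpha) - 3 = 0
        <-> (x = beta \/ x = b)) /\
    beta < -1 /\ 1 < b.
Proof.
  assert (hd : 0 < 1 - a * alpha) by nra.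
  set (q := (a - alpha) ^ 2 / (1 - a * alpha)).
  assert (hq : q * (1 - a * alpha) = (a - alpha) ^ 2).
  { unfold q; field; lra. }
  assert (hq0 : 0 <= q).
  { unfold q; apply Rmult_le_pos; [nra | left; apply Rinv_0_lt_compat; lra]. }
  assert (pA : (a-alpha)^2 < (2-a-alpha)*(1-a*alpha)).
  { assert (0 < (1-a)*(a-alpha)) by (apply Rmult_lt_0_compat; lra).
    assert (0 < (1-a)*(a-alpha)*(1+alpha)) by (apply Rmult_lt_0_compat; lra).
    assert (0 < (1-a)*(1-a)*(1+alpha)) by (apply Rmult_lt_0_compat; try apply Rmult_lt_0_compat; lra).
    nra. }
  assert (pB : (a-alpha)^2 < (2+a+alpha)*(1-a*alpha)).
  { assert (0 < (1+alpha)*(a-alpha)) by (apply Rmult_lt_0_compat; lra).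
    assert (0 < (1+alpha)*(a-alpha)*(1-a)) by (apply Rmult_lt_0_compat; lra).
    assert (0 < (1+alpha)*(1+alpha)*(1-a)) by (apply Rmult_lt_0_compat; try apply Rmult_lt_0_compat; lra).
    nra. }
  assert (hA : q < 2 - a - alpha).
  { apply (Rmult_lt_reg_r (1 - a*alpha)); lra. }
  assert (hB : q < 2 + a + alpha).
  { apply (Rmult_lt_reg_r (1 - a*alpha)); lra. }
  set (s := a + alpha).
  set (D := s ^ 2 - 4 * (q - 3)).
  assert (hD : 0 < D) by (unfold D, s; nra).
  set (r := sqrt D).
  assert (hr : 0 < r) by (apply sqrt_lt_R0; lra).
  assert (hr2 : r * r = D) by (apply sqrt_sqrt; lra).
  exists ((- s - r) / 2), ((- s + r) / 2).
  split; [lra|].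
  split.
  - intro x.
    assert (E : x ^ 2 + s * x + q - 3 = (x - (- s - r) / 2) * (x - (- s + r) / 2)).
    { assert (Hq : q - 3 = (s^2 - r*r)/4) by (unfold D in hr2; idtac; lra).
      replace (x ^ 2 + s * x + q - 3) with (x ^ 2 + s * x + (q - 3)) by ring.
      rewrite Hq; field. }
    fold s. rewrite E. split.
    + intro H. apply Rmult_integral in H. lra.
    + intros [H|H]; rewrite H; ring.
  - unfold D in hr2. split.
    + destruct (Rle_lt_dec (2 - s) 0).
      * lra.
      * assert (r > 2 - s); [|lra].
        destruct (Rle_lt_dec r (2 - s)); [|lra].
        assert (r * r <= (2 - s) * (2 - s)) by (apply Rmult_le_compat; lra).
        unfold s in *; nra.
    + destruct (Rle_lt_dec (2 + s) 0).
      * lra.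
      * assert (r > 2 + s); [|lra].
        destruct (Rle_lt_dec r (2 + s)); [|lra].
        assert (r * r <= (2 + s) * (2 + s)) by (apply Rmult_le_compat; lra).
        unfold s in *; nra.
Qed.
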